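(* Let $s\in\{0,1\}^n$, $p\in[0,1)$, and $x\in\{0,1\}^k$ with $k\ge2$. Then $$N_x=\frac{1}{(1-p)^k}\left(E_x-\sum_{i=k+1}^{n}\sum_{y\in Y_i(x)}(-1)^{|y|-|x|+1}E_y\binom{y}{x}'\left(\frac{p}{1-p}\right)^{i-k}\right).$$
   Context: Deletion channel: a trace $\tilde S$ of $s$ is obtained by deleting each bit of $s$ independently with probability $p$. For a binary string $y$, $N_y$ is the number of positions at which $y$ occurs as a (contiguous) substring of $s$, and $E_y$ is the expected number of positions at which $y$ occurs as a substring of $\tilde S$. For a string $z$, $z[2:-2]$ is $z$ with its first and last symbols removed; $\binom{y}{z}$ is the number of ways to delete $|y|-|z|$ symbols of $y$ to obtain $z$, and $\binom{y}{z}'=\binom{y[2:-2]}{z[2:-2]}$. $Y_i(x)$ is the set of binary strings of length $i$ that are supersequences of $x$ with the same first bit and same last bit as $x$. *)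

(* Defs.v *)
From HB Require Import structures.
From mathcomp Require Import all_boot all_order all_algebra.
Set Implicit Arguments. Unset Strict Implicit. Unset Printing Implicit Defensive.
Import Order.TTheory GRing.Theory Num.Theory.
Local Open Scope ring_scope.

(* Binary strings are [seq bool]. A deletion pattern for s is a mask
   m : (size s).-tuple bool, with m_j = true meaning bit j is KEPT. *)

Definition occ (y t : seq bool) : nat :=
  count (fun j => prefix y (drop j t)) (iota 0 (size t).+1).

Definition Nocc (s y : seq bool) : nat := occ y s.

(* E_y : expected number of occurrences of y in the trace of s through a
   deletion channel with deletion probability p *)
Definition Eocc (R : realFieldType) (s : seq bool) (p : R) (y : seq bool) : R :=
  \sum_(m : (size s).-tuple bool)
     (1 - p) ^+ (count id m) * p ^+ (size s - count id m)
       * (occ y (mask m s))%:R.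

Definition binom (y z : seq bool) : nat :=
  #|[set m : (size y).-tuple bool | mask m y == z]|.

Definition inner (z : seq bool) : seq bool := take (size z).-2 (behead z).

Definition binom' (y z : seq bool) : nat := binom (inner y) (inner z).

(* membership in Y_i(x) for y of length i *)
Definition inY (x y : seq bool) : bool :=
  [&& subseq x y, head false y == head false x & last false y == last false x].

(* Main.v *)
Require Import Defs.
From HB Require Import structures.
From mathcomp Require Import all_boot all_order all_algebra.
From mathcomp Require Import ring lra.
Set Implicit Arguments. Unset Strict Implicit. Unset Printing Implicit Defensive.
Import Order.TTheory GRing.Theory Num.Theory.
Local Open Scope ring_scope.

Lemma big_tupleS (R : Type) (idx : R) (op : Monoid.com_law idx) n
  (F : n.+1.-tuple bool -> R) :
  \big[op/idx]_(m : n.+1.-tuple bool) F m =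
  \big[op/idx]_(b : bool) \big[op/idx]_(m : n.-tuple bool) F [tuple of b :: m].
Proof.
rewrite pair_big /=.
pose h (bm : bool * n.-tuple bool) : n.+1.-tuple bool := [tuple of bm.1 :: bm.2].
pose g (m : n.+1.-tuple bool) : bool * n.-tuple bool := (thead m, [tuple of behead m]).
have hg : cancel g h by move=> m; apply: val_inj; rewrite /= [in RHS](tuple_eta m).
have gh : cancel h g.
  by move=> [b m]; rewrite /g /h /thead /= tnth0; congr (_, _); apply: val_inj.
rewrite (reindex h) //; exact: onW_bij (Bijective gh hg).
Qed.

Lemma big_tuple0 (R : Type) (idx : R) (op : Monoid.com_law idx)
  (F : 0.-tuple bool -> R) :
  \big[op/idx]_(m : 0.-tuple bool) F m = F [tuple].
Proof.
by rewrite (big_pred1 [tuple]) // => m; rewrite [m]tuple0 /= eq_refl.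
Qed.

Definition Ex (R : realFieldType) (p : R) (s : seq bool) (F : seq bool -> R) : R :=
  \sum_(m : (size s).-tuple bool)
     (1 - p) ^+ (count id m) * p ^+ (size s - count id m) * F (mask m s).

Lemma EoccE (R : realFieldType) (s : seq bool) (p : R) y :
  Eocc s p y = Ex p s (fun t => (occ y t)%:R).
Proof. by []. Qed.

Lemma Ex_nil (R : realFieldType) (p : R) F : Ex p [::] F = F [::].
Proof. by rewrite /Ex big_tuple0 /= expr0 !mul1r. Qed.

Lemma Ex_cons (R : realFieldType) (p : R) a s F :
  Ex p (a :: s) F = (1 - p) * Ex p s (fun t => F (a :: t)) + p * Ex p s F.
Proof.
rewrite /Ex /= big_tupleS big_bool /= !mulr_sumr; congr (_ + _).
  apply: eq_bigr => m _ /=; rewrite add1n subSS exprS !mulrA.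
  by congr (_ * _ * _); rewrite mulrC.
apply: eq_bigr => m _ /=; rewrite add0n subSn; last by rewrite -{2}(size_tuple m) count_size.
rewrite exprS.
by rewrite !mulrA [p * _]mulrC.
Qed.

Lemma Ex_add (R : realFieldType) (p : R) s F G :
  Ex p s (fun t => F t + G t) = Ex p s F + Ex p s G.
Proof. by rewrite /Ex -big_split; apply: eq_bigr => m _; rewrite mulrDr. Qed.

Lemma Ex_scale (R : realFieldType) (p : R) s (u : R) F :
  Ex p s (fun t => u * F t) = u * Ex p s F.
Proof. by rewrite /Ex mulr_sumr; apply: eq_bigr => m _; rewrite mulrCA. Qed.

Lemma Ex_ext (R : realFieldType) (p : R) s F G :
  (forall t, F t = G t) -> Ex p s F = Ex p s G.
Proof. by move=> e; apply: eq_bigr => m _; rewrite e. Qed.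

Lemma Ex_const (R : realFieldType) (p : R) s u : Ex p s (fun _ => u) = u.
Proof.
elim: s => [|a s IH]; first by rewrite Ex_nil.
by rewrite Ex_cons IH -mulrDl subrK mul1r.
Qed.

Fixpoint bin (u v : seq bool) : nat :=
  match u with
  | [::] => (v == [::]) : nat
  | a :: u' => (bin u' v + (if v is v0 :: v' then (a == v0) * bin u' v' else 0))%N
  end.

Lemma bin_sum n u v : size u = n ->
  (\sum_(m : n.-tuple bool) ((mask m u == v) : nat))%N = bin u v.
Proof.
elim: n u v => [|n IH] [|a u] v //= e.
  by rewrite big_tuple0 /= eq_sym.
case: e => e.
rewrite big_tupleS big_bool /= addnC; congr (_ + _)%N.
  by rewrite -(IH u v e).
case: v => [|v0 v].
  by rewrite big1.
rewrite -(IH u v e) big_distrr /=; apply: eq_bigr => m _; rewrite eqseq_cons.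
by case: (a == v0); rewrite ?muln0 ?mul1n.
Qed.

Lemma binomE u v : binom u v = bin u v.
Proof.
rewrite /binom -sum1_card big_mkcond /= -(bin_sum v (erefl (size u))).
by apply: eq_bigr => m _; rewrite inE; case: eqP.
Qed.

Lemma bin_small u v : (size u < size v)%N -> bin u v = 0%N.
Proof.
elim: u v => [|a u IH] [|b v] //.
move=> /= h.
rewrite (IH (b :: v)); last exact: ltn_trans (ltnSn _) h.
by rewrite IH ?muln0.
Qed.

Lemma bin_refl u : bin u u = 1%N.
Proof. elim: u => [|a u IH] //. rewrite /= bin_small ?ltnSn // eqxx IH. by []. Qed.

Lemma bin_subseq u v : (0 < bin u v)%N -> subseq v u.
Proof.
elim: u v => [|a u IH] [|b v] //; try by rewrite sub0seq.
rewrite [bin _ _]/= addn_gt0 => /orP [/IH h|].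
  apply: (subseq_trans h); exact: subseq_cons.
case: eqP => [->|] //= ; rewrite mul1n => /IH.
by rewrite eqxx.
Qed.
Fixpoint Ef (q w : seq bool) : nat :=
  match w with
  | [::] => (q == [::]) : nat
  | a :: w' => if q is q0 :: q' then ((a == q0) * Ef q' w' + Ef q w')%N else 0%N
  end.

Lemma Ef_small q w : (size w < size q)%N -> Ef q w = 0%N.
Proof.
elim: w q => [|a w IH] [|q0 q] //= h.
by rewrite IH // IH ?muln0 // (ltn_trans _ h).
Qed.

Lemma Ef_nil_rcons w a : Ef [::] (rcons w a) = 0%N.
Proof. by case: w. Qed.

Lemma Ef_rcons q1 ql w a :
  Ef (rcons q1 ql) (rcons w a) = ((a == ql) * bin w q1)%N.
Proof.
elim: w q1 => [|c w IH] [|q0 q1] /=.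
- by rewrite muln1 addn0.
- by case: q1 => [|? ?]; rewrite /= ?muln0.
- by rewrite Ef_nil_rcons muln0 add0n (IH [::]) /= addn0.
- rewrite IH (IH (q0 :: q1)) /= mulnDr addnC; congr (_ + _)%N.
  by rewrite mulnCA.
Qed.

Lemma inner_rcons x0 xi xl : inner (x0 :: rcons xi xl) = xi.
Proof. by rewrite /inner /= size_rcons /= -cats1 take_size_cat. Qed.

Lemma window x b w : (2 <= size x)%N ->
  (inY x (b :: w) * binom' (b :: w) x)%N = ((b == head false x) * Ef (behead x) w)%N.
Proof.
case: x => [|x0 x] //; case/lastP: x => [|xi xl] //= _.
case/lastP: w => [|w a].
  rewrite Ef_small ?muln0; last by rewrite size_rcons.
  suff -> : inY (x0 :: rcons xi xl) [:: b] = false by [].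
  apply/negbTE/negP => /and3P [/size_subseq]; by rewrite /= size_rcons.
rewrite /binom' inner_rcons -rcons_cons inner_rcons binomE Ef_rcons /inY /=.
rewrite !last_rcons.
case: (b =P x0) => [->|]; case: (a =P xl) => [->|]; rewrite ?andbF ?mul0n //=.
case: (posnP (bin w xi)) => [->|h]; first by rewrite !muln0.
rewrite eqxx /= -!cats1 cat_subseq ?(bin_subseq h) //; by rewrite /= !mul1n.
Qed.

Fixpoint Dr (R : comRingType) (c : R) (q t : seq bool) : R :=
  match t with
  | [::] => ((q == [::]) : nat)%:R
  | a :: t' => match q with
               | [::] => 1
               | q0 :: q' => ((a == q0) : nat)%:R * Dr c q' t' + c * Dr c q t'
               end
  end.

Lemma Dr_sum (R : comRingType) (c : R) q t M : (size t <= M)%N ->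
  Dr c q t = \sum_(0 <= j < M.+1)
     c ^+ (j - size q) * (((j <= size t) * Ef q (take j t))%N)%:R.
Proof.
elim: t q M => [|a t IH] q M hM.
  rewrite big_nat_recl // big1 => [|j _]; last by rewrite /= mul0n mulr0.
  by rewrite /= addr0; case: q => [|? ?]; rewrite /= ?expr0 ?mul1r ?mulr0.
case: M hM => [|M] //= hM.
rewrite big_nat_recl // take0 /= mul1n.
case: q => [|q0 q].
  by rewrite expr0 mul1r big1 ?addr0 // => j _; rewrite /= muln0 mulr0.
rewrite /= mulr0 add0r (IH q M) // (IH (q0 :: q) M) // mulr_sumr mulr_sumr.
rewrite -big_split; apply: eq_bigr => j _ /=.
rewrite subSS ltnS mulnDr !natrD !natrM mulrDr; congr (_ + _).
  by ring.
case: (ltnP j (size q).+1) => hj.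
  rewrite (@Ef_small _ (take j t)) ?muln0 ?mulr0 //.
  by rewrite size_take_min; exact: leq_ltn_trans (geq_minl _ _) hj.
by rewrite mulrA -exprS -subSn.
Qed.

Lemma Dr_nil (R : comRingType) (c : R) t : Dr c [::] t = 1.
Proof. by case: t. Qed.

Lemma Ex_Dr (R : realFieldType) (p : R) q s : p != 1 ->
  Ex p s (Dr (- (p / (1 - p))) q) = (1 - p) ^+ size q * ((prefix q s) : nat)%:R.
Proof.
move=> p1; have p1' : 1 - p != 0 by rewrite subr_eq0 eq_sym.
elim: s q => [|a s IH] q.
  by rewrite Ex_nil; case: q => [|? ?]; rewrite /= ?expr0 ?mul1r ?mulr0.
rewrite Ex_cons; case: q => [|q0 q].
  rewrite (@Ex_ext _ _ _ _ (fun _ => 1) (fun t => Dr_nil _ t)) (@Ex_ext _ _ _ _ (fun _ => 1) (fun t => Dr_nil _ (a :: t))).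
  by rewrite !Ex_const /= expr0 !mulr1 subrK.
rewrite (@Ex_ext _ _ _ _ ( fun t => ((a == q0) : nat)%:R * Dr (- (p / (1 - p))) q t
      + (- (p / (1 - p))) * Dr (- (p / (1 - p))) (q0 :: q) t)) //.
rewrite Ex_add !Ex_scale !IH /= -mulnb natrM eq_sym.
move: ((q0 == a) : nat)%:R ((prefix q s) : nat)%:R ((prefix (q0 :: q) s) : nat)%:R => A B C.
rewrite exprS; field; exact: p1'.
Qed.

Lemma occ_cons y b t : occ y (b :: t) = (prefix y (b :: t) + occ y t)%N.
Proof.
rewrite /occ (_ : iota 0 (size (b :: t)).+1 = 0%N :: iota 1 (size t).+1) //.
rewrite (_ : iota 1 (size t).+1 = map (addn 1) (iota 0 (size t).+1)); last by rewrite -iotaDl.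
rewrite /= drop0 count_map; congr (_ + _)%N.
Qed.

Lemma occ_small y t : (size t < size y)%N -> occ y t = 0%N.
Proof.
move=> h; rewrite /occ; apply/eqP; rewrite -leqn0 leqNgt -has_count; apply/hasPn => j _.
apply/negP => /size_prefix; rewrite size_drop => h'.
by have := leq_trans h' (leq_subr _ _); rewrite leqNgt h.
Qed.

Lemma sum_prefix (R : comRingType) i u (P : pred (seq bool)) (f : seq bool -> R) :
  \sum_(y : i.-tuple bool | P y) f y * ((prefix y u) : nat)%:R =
  if (i <= size u)%N && P (take i u) then f (take i u) else 0.
Proof.
case hi: (i <= size u)%N => /=; last first.
  rewrite big1 // => y _; suff -> : prefix y u = false by rewrite mulr0.
  apply/negP => /size_prefix; rewrite size_tuple hi //.
have ht : size (take i u) == i by rewrite size_takel.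
rewrite big_mkcond (bigD1 (Tuple ht)) //= big1 ?addr0.
  by rewrite prefix_take mulr1; case: (P _).
move=> y hy; case: (P y); rewrite ?mulr0 //.
suff -> : prefix y u = false by rewrite mulr0.
apply/negP; rewrite prefixE size_tuple => /eqP e; move/negP: hy; apply.
by apply/eqP/val_inj; rewrite /= e.
Qed.

Definition Gf (R : comRingType) (c : R) (x : seq bool) M (t : seq bool) : R :=
  \sum_(0 <= i < M.+1) c ^+ (i - size x) *
    \sum_(y : i.-tuple bool | inY x y) (binom' y x)%:R * (occ y t)%:R.

Definition Af (R : comRingType) (c : R) (x : seq bool) M (t : seq bool) : R :=
  \sum_(0 <= i < M.+1) c ^+ (i - size x) *
    \sum_(y : i.-tuple bool | inY x y) (binom' y x)%:R * ((prefix y t) : nat)%:R.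

Lemma Gf_cons (R : comRingType) (c : R) x M b t :
  Gf c x M (b :: t) = Af c x M (b :: t) + Gf c x M t.
Proof.
rewrite /Gf /Af -big_split; apply: eq_bigr => i _; rewrite /= -mulrDr -big_split.
by congr (_ * _); apply: eq_bigr => y _; rewrite occ_cons natrD mulrDr.
Qed.

Lemma Af_cons (R : comRingType) (c : R) x M b t :
  (2 <= size x)%N -> (size t < M)%N ->
  Af c x M (b :: t) = ((b == head false x) : nat)%:R * Dr c (behead x) t.
Proof.
move=> hx ht; rewrite /Af.
under eq_bigr => i _ do rewrite (sum_prefix _ _ (inY x) (fun y => (binom' y x)%:R)).
case: M ht => [|M] // ht.
rewrite (Dr_sum c (behead x) ht) mulr_sumr big_nat_recl //=.
rewrite (_ : inY x [::] = false) ?mulr0 ?add0r; last by case: x hx.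
apply: eq_bigr => j _.
have := window b (take j t) hx.
rewrite ltnS; case: (j <= size t)%N => /=; last by move=> _; rewrite mul0n !mulr0.
case: x hx => [|x0 x] //= hx; rewrite subSS.
case: (inY _ _) => /= e.
  by rewrite mul1n in e; rewrite e natrM mul1n; ring.
by rewrite mul1n mulrCA -natrM -e !mulr0.
Qed.

Lemma Ex_ext_size (R : realFieldType) (p : R) s F G :
  (forall t, (size t <= size s)%N -> F t = G t) -> Ex p s F = Ex p s G.
Proof.
move=> e; apply: eq_bigr => m _; rewrite e //.
exact: size_subseq (mask_subseq _ _).
Qed.

Lemma inY_size x y : inY x y -> (size x <= size y)%N.
Proof. by case/and3P => /size_subseq. Qed.

Lemma Ex_Gf (R : realFieldType) (p : R) x M s : p != 1 -> (2 <= size x)%N ->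
  (size s <= M)%N ->
  Ex p s (Gf (- (p / (1 - p))) x M) = (1 - p) ^+ size x * (occ x s)%:R.
Proof.
move=> p1 hx; elim: s => [|a s IH] hs.
  rewrite Ex_nil occ_small ?mulr0; last by rewrite (leq_trans _ hx).
  rewrite /Gf big1 // => i _; rewrite big1 ?mulr0 // => y hy.
  by rewrite occ_small ?mulr0 // (leq_trans _ (inY_size hy)) // (leq_trans _ hx).
rewrite Ex_cons.
rewrite (@Ex_ext _ _ _ _ (fun t => Af (- (p / (1 - p))) x M (a :: t)
   + Gf (- (p / (1 - p))) x M t)); last by move=> t; rewrite Gf_cons.
rewrite Ex_add IH ?(ltnW hs) //.
rewrite (@Ex_ext_size _ _ _ _ (fun t => ((a == head false x) : nat)%:R *
   Dr (- (p / (1 - p))) (behead x) t)); last first.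
  by move=> t ht; rewrite Af_cons // (leq_ltn_trans ht hs).
rewrite Ex_scale Ex_Dr // occ_cons natrD.
case: x hx IH => [|x0 x] //= hx IH.
rewrite -mulnb natrM eq_sym exprS.
move: ((x0 == a) : nat)%:R ((prefix x s) : nat)%:R ((occ (x0 :: x) s) : nat)%:R => A B C.
ring.
Qed.

Lemma Ex_Gf_sum (R : realFieldType) (p c : R) x M s :
  Ex p s (Gf c x M) = \sum_(0 <= i < M.+1) c ^+ (i - size x) *
    \sum_(y : i.-tuple bool | inY x y) (binom' y x)%:R * Eocc s p y.
Proof.
rewrite /Ex /Gf.
under eq_bigr => m _ do rewrite mulr_sumr.
rewrite exchange_big /=; apply: eq_bigr => i _.
under eq_bigr => m _ do rewrite mulrCA mulr_sumr.
rewrite -mulr_sumr; congr (_ * _).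
rewrite exchange_big /=; apply: eq_bigr => y _.
rewrite /Eocc mulr_sumr; apply: eq_bigr => m _; ring.
Qed.

Lemma T_small (R : realFieldType) (s : seq bool) (p : R) x i : (i < size x)%N ->
  \sum_(y : i.-tuple bool | inY x y) (binom' y x)%:R * Eocc s p y = 0.
Proof.
move=> hi; rewrite big1 // => y hy.
by have := inY_size hy; rewrite size_tuple leqNgt hi.
Qed.

Lemma T_eq (R : realFieldType) (s : seq bool) (p : R) x :
  \sum_(y : (size x).-tuple bool | inY x y) (binom' y x)%:R * Eocc s p y = Eocc s p x.
Proof.
have hx : size x == size x by [].
have hin : inY x (Tuple hx) by rewrite /inY /= subseq_refl !eqxx.
rewrite (bigD1 (Tuple hx)) //= big1 ?addr0.
  by rewrite /binom' binomE bin_refl mul1r.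
move=> y /andP [hy ne]; exfalso; move/negP: ne; apply.
case/and3P: hy => sy _ _.
have := (size_subseq_leqif sy).2; rewrite size_tuple eqxx => /esym/eqP e.
by apply/eqP/val_inj.
Qed.

Unset Implicit Arguments.

Theorem lemma4 (R : realFieldType) (s : seq bool) (p : R) (x : seq bool) :
  0 <= p -> p < 1 -> (2 <= size x)%N ->
  (Nocc s x)%:R =
    ((1 - p) ^+ (size x))^-1 *
    (Eocc s p x -
     \sum_((size x).+1 <= i < (size s).+1)
       \sum_(y : i.-tuple bool | inY x y)
         (-1) ^+ (i - size x + 1) * Eocc s p y * (binom' y x)%:R
           * (p / (1 - p)) ^+ (i - size x)).
Proof.
move=> p0 p1 hx.
have pn1 : p != 1 by rewrite lt_eqF.
have K0 : (1 - p) ^+ size x != 0 by rewrite expf_neq0 // subr_eq0 eq_sym.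
rewrite /Nocc.
case: (ltnP (size s) (size x)) => hsx.
  rewrite occ_small // big_geq; last by rewrite ltnS ltnW.
  rewrite EoccE (@Ex_ext_size _ _ _ _ (fun _ => 0)) ?Ex_const ?subrr ?mulr0 //.
  by move=> t ht; rewrite occ_small // (leq_ltn_trans ht hsx).
have := Ex_Gf (M := size s) pn1 hx (leqnn _).
rewrite Ex_Gf_sum (big_cat_nat (n := size x)) ?leq0n; last exact: (leq_trans hsx (leqnSn _)).
rewrite /= big1_seq; last first.
  move=> i /andP [_]; rewrite mem_index_iota => /andP [_ hi].
  by rewrite T_small ?mulr0.
rewrite add0r big_ltn ?ltnS // subnn expr0 mul1r T_eq => e.
rewrite -[LHS](mulKf K0) -e; congr (_ * _).
congr (_ + _); rewrite -sumrN; apply: eq_bigr => i _.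
rewrite mulr_sumr -sumrN; apply: eq_bigr => y _.
move: (i - size x)%N => j; rewrite [(- (p / (1 - p))) ^+ j]exprNn addn1 exprS.
move: ((-1) ^+ j) ((p / (1 - p)) ^+ j) => u v; ring.
done.
Qed.
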